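(* Let $F_1,F_2$ be bijections of $\mathbb F_2^m$ with $F_1(0)=F_2(0)=0$, and $S=STS(\mathcal H^n)$. If the self-embeddings $S\cup F_1(S)$ and $S\cup F_2(S)$ are isomorphic, then the codes $\mathcal C_{F_1}$ and $\mathcal C_{F_2}$ are equivalent.
   Context: $n=2^m-1$; identify $\mathbb F_2^m$ with $GF(2^m)$. $S=STS(\mathcal H^n)$ is the set of 3-subsets $\{a,b,c\}$ of nonzero elements with $a+b+c=0$; $F(S)=\{\{F(a),F(b),F(c)\}:\{a,b,c\}\in S\}$. Self-embeddings $S\cup F_1(S)$, $S\cup F_2(S)$ are isomorphic if there is a permutation $\sigma$ of the nonzero elements with either $\sigma(S)=S,\sigma(F_1(S))=F_2(S)$ or $\sigma(S)=F_2(S),\sigma(F_1(S))=S$. For a bijection $F$ with $F(0)=0$, $\mathcal C_F$ is the binary linear code of length $n$ whose parity-check matrix is the $2m\times n$ matrix whose columns are $\binom{x}{F(x)}$, $x$ ranging over the nonzero vectors of $\mathbb F_2^m$ (coordinates indexed by the nonzero $x$). Two binary codes of length $n$ are equivalent if one is obtained from the other by a coordinate permutation and a translation (for linear codes, equivalently by a coordinate permutation). *)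

(* Defs.v *)
From HB Require Import structures.
From mathcomp Require Import all_boot all_order all_fingroup all_algebra.
Set Implicit Arguments. Unset Strict Implicit. Unset Printing Implicit Defensive.
Import GRing.Theory.
Local Open Scope ring_scope.

(* F_2^m, identified with GF(2^m) as an F_2-vector space *)
Definition Vec (m : nat) := 'rV['F_2]_m.

(* the nonzero vectors: points of STS(H^n), n = 2^m - 1; also the coordinate set *)
Definition Pts (m : nat) := {x : Vec m | x != 0}.

Definition STS (m : nat) : {set {set Vec m}} :=
  [set T : {set Vec m} | [exists a : Vec m, exists b : Vec m, exists c : Vec m,
     [&& a != 0, b != 0, c != 0, a != b, a != c, b != c,
         a + b + c == 0 & T == [set a; b; c]]]].

Definition imgTriples (m : nat) (F : Vec m -> Vec m) (X : {set {set Vec m}})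
  : {set {set Vec m}} := [set F @: T | T : {set Vec m} in X].

Definition imgSTS (m : nat) (F : Vec m -> Vec m) : {set {set Vec m}} :=
  imgTriples F (STS m).

(* Isomorphism of the self-embeddings S ∪ F1(S) and S ∪ F2(S): a permutation
   sigma of the nonzero vectors (represented as a permutation of F_2^m fixing 0)
   with sigma(S)=S and sigma(F1(S))=F2(S), or sigma(S)=F2(S) and sigma(F1(S))=S. *)
Definition selfemb_iso (m : nat) (F1 F2 : Vec m -> Vec m) : Prop :=
  exists sigma : {perm Vec m}, sigma 0 = 0 /\
    ((imgTriples sigma (STS m) = STS m /\
      imgTriples sigma (imgSTS F1) = imgSTS F2) \/
     (imgTriples sigma (STS m) = imgSTS F2 /\
      imgTriples sigma (imgSTS F1) = STS m)).

(* C_F: binary linear code of length n indexed by the nonzero x, with parity-check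
   matrix whose columns are (x ; F x). *)
Definition codeF (m : nat) (F : Vec m -> Vec m) : {set {ffun Pts m -> 'F_2}} :=
  [set c : {ffun Pts m -> 'F_2} |
     (\sum_(x : Pts m) c x *: val x == 0) && (\sum_(x : Pts m) c x *: F (val x) == 0)].

Definition codes_equiv (m : nat) (C1 C2 : {set {ffun Pts m -> 'F_2}}) : Prop :=
  exists (pi : {perm Pts m}) (v : {ffun Pts m -> 'F_2}),
    C2 = [set [ffun x => c (pi x) + v x] | c : {ffun Pts m -> 'F_2} in C1].

(* Main.v *)
Require Import Defs.
From HB Require Import structures.
From mathcomp Require Import all_boot all_order all_fingroup all_algebra.
Set Implicit Arguments. Unset Strict Implicit. Unset Printing Implicit Defensive.
Import GRing.Theory.
Local Open Scope ring_scope.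
Lemma F2cases (c : 'F_2) : c = 0 \/ c = 1.
Proof. case: c => [[|[|k]] Hk]; [left|right|]; try by apply/val_inj. by []. Qed.
Lemma addvv m (v : Vec m) : v + v = 0.
Proof. apply/rowP => i; rewrite !mxE. case: (F2cases (v 0 i)) => ->; first by rewrite addr0.
by apply/val_inj. Qed.
Lemma sum3 (T : finType) (V : nmodType) (f : T -> V) a b c : a != b -> a != c -> b != c ->
  \sum_(z in [set a; b; c]) f z = f a + f b + f c.
Proof.
move=> ab ac bc. rewrite -setUA big_setU1 /=; last by rewrite !inE negb_or ab ac.
rewrite big_setU1 /=; last by rewrite !inE bc.
by rewrite big_set1 addrA.
Qed.
Lemma char2_eq m (x y : Vec m) : x + y = 0 -> x = y.
Proof. move=> h. by rewrite -[x]addr0 -(addvv y) addrA h add0r. Qed.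

Lemma sumSTS m T : T \in STS m -> \sum_(z in T) z = 0.
Proof.
rewrite inE => /existsP[a /existsP[b /existsP[c]]].
do 3 case/andP => _.
case/andP => ab; case/andP => ac; case/andP => bc /andP[/eqP s /eqP ->].
by rewrite sum3.
Qed.

Lemma neq_addr m (a b : Vec m) : b != 0 -> a != a + b.
Proof.
move=> b0; apply: contra b0 => /eqP h.
by apply/eqP; rewrite -(addKr a b) -h addNr.
Qed.
Lemma neq_addl m (a b : Vec m) : a != 0 -> b != a + b.
Proof. by move=> a0; rewrite addrC neq_addr. Qed.

Definition pres m (f : Vec m -> Vec m) :=
  forall T, T \in STS m -> f @: T \in STS m.

Lemma pres_add m (f : Vec m -> Vec m) : injective f -> f 0 = 0 -> pres f ->
  forall a b, f (a + b) = f a + f b.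
Proof.
move=> fi f0 fp a b.
have [->|a0] := eqVneq a 0; first by rewrite f0 !add0r.
have [->|b0] := eqVneq b 0; first by rewrite f0 !addr0.
have [->|ab] := eqVneq a b; first by rewrite addvv f0 addvv.
have abne : a + b != 0 by apply: contra ab => /eqP/char2_eq ->.
have T3 : [set a; b; a + b] \in STS m.
  rewrite inE; apply/existsP; exists a; apply/existsP; exists b;
  apply/existsP; exists (a + b).
  rewrite a0 b0 abne ab /=.
  apply/and4P; split => //.
  - exact: neq_addr.
  - exact: neq_addl.
  - by apply/eqP; apply: addvv.
have := sumSTS (fp _ T3).
rewrite big_imset /=; last by move=> x y _ _; apply: fi.
rewrite sum3 //; last first.
- exact: neq_addl.
- exact: neq_addr.
by move/char2_eq => ->.
Qed.

Lemma additive_sum m (M : Vec m -> Vec m) (I : finType) (c : I -> 'F_2) (v : I -> Vec m) :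
  M 0 = 0 -> (forall a b, M (a + b) = M a + M b) ->
  M (\sum_i c i *: v i) = \sum_i c i *: M (v i).
Proof.
move=> M0 Madd.
rewrite (big_morph M Madd M0); apply: eq_bigr => i _.
by case: (F2cases (c i)) => ->; rewrite ?scale0r ?scale1r.
Qed.

Lemma additive_eq0 m (M : Vec m -> Vec m) v : injective M -> M 0 = 0 -> (M v == 0) = (v == 0).
Proof. by move=> Mi M0; rewrite -{1}M0 (inj_eq Mi). Qed.

Section Equiv.
Variables (m : nat) (F1 F2 P u w M1 M2 : Vec m -> Vec m).
Hypotheses (Pi : injective P) (P0 : P 0 = 0) (M1i : injective M1) (M2i : injective M2)
  (M10 : M1 0 = 0) (M20 : M2 0 = 0)
  (M1a : forall a b, M1 (a + b) = M1 a + M1 b) (M2a : forall a b, M2 (a + b) = M2 a + M2 b)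
  (Pu : forall x, P x = M1 (u x)) (Pw : forall x, F2 (P x) = M2 (w x))
  (cond : forall c : {ffun Pts m -> 'F_2},
     (\sum_(x : Pts m) c x *: val x == 0) && (\sum_(x : Pts m) c x *: F1 (val x) == 0) =
     (\sum_(x : Pts m) c x *: u (val x) == 0) && (\sum_(x : Pts m) c x *: w (val x) == 0)).

Lemma Pnz (x : Pts m) : P (val x) != 0.
Proof. apply: contra (valP x) => /eqP h; apply/eqP; apply: Pi; by rewrite h P0. Qed.

Definition Q (x : Pts m) : Pts m := exist _ (P (val x)) (Pnz x).

Lemma Qinj : injective Q.
Proof. move=> x y /(congr1 val) /= /Pi; exact: val_inj. Qed.

Definition piQ : {perm Pts m} := (perm Qinj)^-1.

Lemma key (c : {ffun Pts m -> 'F_2}) :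
  ([ffun y => c (piQ y)] \in codeF F2) = (c \in codeF F1).
Proof.
rewrite !inE cond.
rewrite (reindex_inj Qinj) /=.
rewrite [X in _ && (X == 0)](reindex_inj Qinj) /=.
have E : forall x, [ffun y => c (piQ y)] (Q x) = c x.
  by move=> x; rewrite ffunE /piQ -(permE Qinj) permK.
under eq_bigr do rewrite E Pu.
under [X in _ && (X == 0)]eq_bigr do rewrite E Pw.
by rewrite -(additive_sum _ _ M10 M1a) -(additive_sum _ _ M20 M2a) !additive_eq0.
Qed.

Lemma equiv_main : codes_equiv (codeF F1) (codeF F2).
Proof.
exists piQ, 0; apply/setP => d; apply/idP/imsetP.
- move=> dC; exists [ffun x => d (Q x)].
    rewrite -key; suff -> : [ffun y => [ffun x => d (Q x)] (piQ y)] = d by [].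
    apply/ffunP => y.
    by rewrite !ffunE /piQ -(permE Qinj) permKV.
  apply/ffunP => y; rewrite !ffunE addr0 /piQ -(permE Qinj) permKV //.
- case=> c cC ->.
  have -> : [ffun x => c (piQ x) + (0 : {ffun Pts m -> 'F_2}) x] = [ffun y => c (piQ y)].
    by apply/ffunP => y; rewrite !ffunE addr0.
  by rewrite key.
Qed.
End Equiv.

Lemma pres_back m (f F2 g : Vec m -> Vec m) : cancel F2 g ->
  (forall T, T \in STS m -> f @: T \in imgSTS F2) -> pres (fun x => g (f x)).
Proof.
move=> F2g H T TS; case/imsetP: (H T TS) => T' T'S E.
rewrite (imset_comp g f) /= E -imset_comp.
rewrite (eq_imset _ F2g) imset_id //.
Qed.

Theorem mainTheorem11 (m : nat) (F1 F2 : Vec m -> Vec m) :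
  bijective F1 -> bijective F2 -> F1 0 = 0 -> F2 0 = 0 ->
  selfemb_iso F1 F2 ->
  codes_equiv (codeF F1) (codeF F2).
Proof.
move=> [f1 F1f f1F] [g F2g gF2] F10 F20 [sigma [s0 H]].
have F1i : injective F1 := can_inj F1f.
have gi : injective g := can_inj gF2.
have si : injective sigma := @perm_inj _ sigma.
have g0 : g 0 = 0 by rewrite -F20 F2g.
set P := fun x => g (sigma (F1 x)).
have Pi : injective P by move=> x y /gi /si /F1i.
have P0 : P 0 = 0 by rewrite /P F10 s0 g0.
case: H => [[h1 h2]|[h1 h2]].
- have spres : pres sigma by move=> T TS; rewrite -h1; exact: imset_f.
  have Ppres : pres P.
    apply: (pres_back F2g) => T TS; rewrite -h2 (imset_comp sigma F1).
    apply: imset_f; exact: imset_f.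
  apply: (@equiv_main m F1 F2 P id F1 P sigma) => //.
  + exact: pres_add.
  + exact: pres_add.
  + by move=> x; rewrite /P gF2.
- have Apres : pres (fun x => g (sigma x)).
    by apply: (pres_back F2g) => T TS; rewrite -h1; exact: imset_f.
  have Bpres : pres (fun x => sigma (F1 x)).
    move=> T TS; rewrite -h2 (imset_comp sigma F1); apply: imset_f; exact: imset_f.
  have Ai : injective (fun x => g (sigma x)) by move=> x y /gi /si.
  have A0 : (fun x => g (sigma x)) 0 = 0 by rewrite /= s0 g0.
  have Bi : injective (fun x => sigma (F1 x)) by move=> x y /si /F1i.
  have B0 : (fun x => sigma (F1 x)) 0 = 0 by rewrite /= F10.
  apply: (@equiv_main m F1 F2 P F1 id (fun x => g (sigma x)) (fun x => sigma (F1 x))) => //.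
  + by move=> a b; have := pres_add Ai A0 Apres a b.
  + by move=> a b; have := pres_add Bi B0 Bpres a b.
  + by move=> x; rewrite /P gF2.
  + by move=> c; rewrite andbC.
Qed.
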